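(* Let $(K,\delta)$ be a differential field of characteristic zero. Then $\mathrm{Stab}(\delta,K)=\mathrm{Attrac}(\delta,K)$.
   Context: A differential field $(K,\delta)$ is a field $K$ with an additive map $\delta:K\to K$ such that $\delta(fg)=f\delta(g)+g\delta(f)$. $\mathrm{Stab}(\delta,K)$ is the set of $a\in K$ for which there is a sequence $(a_i)_{i\ge0}$ in $K$ with $a_0=a$ and $\delta(a_{i+1})=a_i$ for all $i\in\mathbb{N}$ (stable elements). $\mathrm{Attrac}(\delta,K)=\bigcap_{i\in\mathbb{N}}\delta^i(K)$ is the set of $a\in K$ such that for every $i\in\mathbb{N}$ there is $a_i\in K$ with $a=\delta^i(a_i)$ (attractive elements). *)

(* Defs.v *)
From HB Require Import structures.
From mathcomp Require Import all_boot all_order all_algebra.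
Set Implicit Arguments. Unset Strict Implicit. Unset Printing Implicit Defensive.
Import GRing.Theory.
Local Open Scope ring_scope.

Definition is_derivation (K : fieldType) (delta : K -> K) : Prop :=
  (forall f g : K, delta (f + g) = delta f + delta g) /\
  (forall f g : K, delta (f * g) = f * delta g + g * delta f).

Definition Stab (K : fieldType) (delta : K -> K) : K -> Prop :=
  fun a => exists s : nat -> K, s 0%N = a /\ forall i : nat, delta (s i.+1) = s i.

Definition Attrac (K : fieldType) (delta : K -> K) : K -> Prop :=
  fun a => forall i : nat, exists b : K, a = iter i delta b.

(* Main.v *)
Set Warnings "-notation-overridden,-ambiguous-paths".
Require Import Defs.
From mathcomp Require Import all_boot all_order all_algebra.
From mathcomp Require Import ring.
From Stdlib Require Import Classical ClassicalEpsilon.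
Import GRing.Theory.
Local Open Scope ring_scope.

Section S.
Variables (K : fieldType) (d : K -> K).
Hypothesis hd : is_derivation d.
Hypothesis hc : [pchar K] =i pred0.

Lemma dD x y : d (x + y) = d x + d y. Proof. by case: hd. Qed.
Lemma dM x y : d (x * y) = x * d y + y * d x. Proof. by case: hd. Qed.
Lemma d0 : d 0 = 0.
Proof. have h := dD 0 0; rewrite addr0 in h; apply: (addrI (d 0)); by rewrite addr0 -h. Qed.
Lemma dN x : d (- x) = - d x.
Proof. apply/eqP; rewrite -subr_eq0 opprK addrC -dD addrN d0 //. Qed.
Lemma dB x y : d (x - y) = d x - d y. Proof. by rewrite dD dN. Qed.
Lemma d1 : d 1 = 0.
Proof. have h := dM 1 1; rewrite !mul1r in h; apply: (addrI (d 1)); by rewrite addr0 -h. Qed.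

Lemma dnat n : d (n%:R) = 0.
Proof. elim: n => [|n IH]; first exact: d0. by rewrite -natr1 dD IH d1 addr0. Qed.

Lemma iterB m x y : iter m d (x - y) = iter m d x - iter m d y.
Proof. elim: m => [|m IH] //=; by rewrite IH dB. Qed.

Lemma dcM c x : d c = 0 -> d (c * x) = c * d x.
Proof. by move=> h; rewrite dM h mulr0 addr0. Qed.

Lemma iter_cM m c x : d c = 0 -> iter m d (c * x) = c * iter m d x.
Proof. move=> h; elim: m => [|m IH] //=; by rewrite IH dcM. Qed.

Lemma natr_nz n : (n.+1)%:R != 0 :> K.
Proof. by move/pcharf0P: hc => ->. Qed.

Lemma dinv x : d x = 0 -> d x^-1 = 0.
Proof.
move=> h; have [->|nz] := eqVneq x 0; first by rewrite invr0 d0.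
have := dM x x^-1; rewrite divff // d1 h mulr0 addr0 => /esym /eqP.
by rewrite mulf_eq0 (negbTE nz) => /eqP.
Qed.

Lemma nod : (forall t, d t <> 1) -> forall w, d (d w) = 0 -> d w = 0.
Proof.
move=> nt w h; apply/eqP/negPn/negP => nz; apply: (nt (w / d w)).
by rewrite dM (@dinv _ h) mulr0 add0r mulVf.
Qed.

Lemma claim1 : (forall t, d t <> 1) -> forall a, Attrac d a ->
  exists x, d x = a /\ Attrac d x.
Proof.
move=> nt a ha; have [b2 hb2] := ha 2%N; exists (d b2); split; first by rewrite hb2.
move=> m; have [y hy] := ha m.+2; exists (d y).
have h : d (d (iter m d y - b2)) = 0.
  rewrite !dB -[d (d (iter m d y))]/(iter m.+2 d y) -hy. rewrite [a]hb2 /=. by rewrite subrr.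
move/(nod nt)/eqP: h; rewrite dB subr_eq0 => /eqP <-.
by rewrite -iterSr.
Qed.

Section T.
Variable t : K.
Hypothesis ht : d t = 1.
Lemma dX k : d (t ^+ k.+1) = (k.+1)%:R * t ^+ k.
Proof.
elim: k => [|k IH]; first by rewrite expr1 ht expr0 mulr1.
rewrite exprS dM IH ht mulr1 mulrA (mulrC t) -mulrA -exprS.
rewrite -!natr1; ring.
Qed.

Lemma iterX m j : exists n : nat, iter m d (t ^+ (m + j)) = (n.+1)%:R * t ^+ j.
Proof.
elim: m j => [|m IH] j; first by exists 0%N; rewrite /= mul1r.
rewrite iterSr addSn dX iter_cM ?dnat //.
have [n hn] := IH j; rewrite hn mulrA -natrM.
by exists ((m + j).+1 * n.+1).-1; rewrite prednK // muln_gt0.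
Qed.

Lemma const_iter m c : d c = 0 -> exists z, iter m d z = c.
Proof.
move=> hc0; have [n hn] := iterX m 0; rewrite addn0 expr0 mulr1 in hn.
exists (c / (n.+1)%:R * t ^+ m).
rewrite iter_cM ?hn ?divfK ?natr_nz //.
by rewrite dM (@dinv _ (dnat _)) hc0 !mulr0 addr0.
Qed.

Lemma claim2 a : Attrac d a -> exists x, d x = a /\ Attrac d x.
Proof.
move=> ha; have [b1 hb1] := ha 1%N; exists b1; split; first by rewrite hb1.
move=> m; have [y hy] := ha m.+1.
have hc1 : d (iter m d y - b1) = 0.
  rewrite dB -[d (iter m d y)]/(iter m.+1 d y) -hy [a]hb1 /=. by rewrite subrr.
have [z hz] := @const_iter m _ hc1.
by exists (y - z); rewrite iterB hz opprB addrC subrK.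
Qed.
End T.

Lemma claim a : Attrac d a -> exists x, d x = a /\ Attrac d x.
Proof.
have [[t ht]|nt] := classic (exists t, d t = 1); first exact: (@claim2 t ht a).
by apply: claim1 => t ht; apply: nt; exists t.
Qed.

Lemma stab_attrac a : Stab d a -> Attrac d a.
Proof.
move=> [s [s0 hs]] i; exists (s i); elim: i => [|i IH] //=.
by rewrite -[d (iter i d _)]/(iter i.+1 d _) iterSr hs.
Qed.

Lemma attrac_stab a : Attrac d a -> Stab d a.
Proof.
move=> ha.
have H : forall y, exists x, Attrac d y -> d x = y /\ Attrac d x.
  move=> y; have [hy|hy] := classic (Attrac d y).
    by have [x hx] := @claim y hy; exists x.
  by exists 0.
pose g y := proj1_sig (constructive_indefinite_description _ (H y)).
have hg y : Attrac d y -> d (g y) = y /\ Attrac d (g y).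
  exact: (proj2_sig (constructive_indefinite_description _ (H y))).
have hA : forall i, Attrac d (iter i g a).
  by elim=> [|i IH] //=; case: (hg _ IH).
exists (fun i => iter i g a); split => // i /=.
by case: (hg _ (hA i)).
Qed.
End S.

Theorem proposition2p4 (K : fieldType) (delta : K -> K) :
  is_derivation delta ->
  [pchar K] =i pred0 ->
  forall a : K, Stab delta a <-> Attrac delta a.
Proof.
move=> hd hc a; split; [exact: stab_attrac | exact: attrac_stab].
Qed.
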